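(* Let $(\Lambda,Y)$ be an extensible graph with parameters $(t,s,\bar s)$ with $t=1$, let $y\in Y$, $Y_1=\Lambda(y,1)$, $Y_2=\Lambda(y,2)$, and $\Lambda_1,\Lambda_2$ the graphs induced by $\Lambda$ on $Y_1,Y_2$. Then: (1) The edges of $\Lambda_1$ form a partition of $Y_1$ into $s$ edges $\alpha_1=\{a'_1,a''_1\},\dots,\alpha_s=\{a'_s,a''_s\}$. (2) Letting $A'_i$ (resp. $A''_i$) be the set of points of $Y_2$ adjacent to $a'_i$ (resp. $a''_i$), for each $i$ the pair $\{A'_i,A''_i\}$ is a partition of $Y_2$ into two subsets of cardinality $\bar s=2(s-1)$. (3) $\Lambda_2$ contains no triangle. (4) Every edge of $\Lambda_2$ is contained in exactly one of the sets $A'_1,A''_1,\dots,A'_s,A''_s$, and the edges of $\Lambda_2$ contained in each of these sets form a partition of it into $s-1$ edges. (5) If $\alpha'$ and $\alpha''$ are edges of $\Lambda_2$ contained in $A'_i$ and $A''_i$ respectively, there exist uniquely determined edges $\beta',\beta''$ of $\Lambda_2$ such that $\alpha',\alpha'',\beta',\beta''$ form a square (a $4$-cycle); moreover there is a unique index $j$ such that one of $\beta',\beta''$ is contained in $A'_j$ and the other in $A''_j$.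
   Context: A finite simple graph $(\Lambda,Y)$ is extensible with parameters $(t,s,\bar s)$ (nonnegative integers) if: (1) $\Lambda$ has diameter $2$; (2) for every $y\in Y$, with $\Lambda(y,d)$ the set of vertices at distance $d$ from $y$: (a) $|\Lambda(y,1)|=2s$; (b) $|\Lambda(y,2)|=2\bar s$; (c) every $z\in\Lambda(y,1)$ is adjacent to exactly $\bar s$ points of $\Lambda(y,2)$ and exactly $t=2s-\bar s-1$ points of $\Lambda(y,1)$; (d) every $z\in\Lambda(y,2)$ is adjacent to exactly $s$ points of $\Lambda(y,2)$ and exactly $s$ points of $\Lambda(y,1)$; (3) every edge lies in exactly $t$ triangles; (4) $|Y|=1+2s+2\bar s$. *)

(* Defs.v *)
From mathcomp Require Import all_boot.
Set Implicit Arguments. Unset Strict Implicit. Unset Printing Implicit Defensive.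

Section Graph.
Variables (T : finType) (e : rel T).

Definition simple_graph : Prop := symmetric e /\ irreflexive e.

Definition nbh1 (y : T) : {set T} := [set z | e y z].
Definition nbh2 (y : T) : {set T} :=
  [set z | (z != y) && ~~ e y z && [exists w, e y w && e w z]].

Definition diameter2 : Prop :=
  (forall x z : T, x != z -> ~~ e x z -> exists w, e x w /\ e w z) /\
  (exists x z : T, x != z /\ ~~ e x z).

Definition extensible (t s sbar : nat) : Prop :=
  [/\ simple_graph,
      diameter2,
      t + sbar + 1 = 2 * s &
   [/\
      (forall y : T,
        [/\ #|nbh1 y| = 2 * s,
            #|nbh2 y| = 2 * sbar,
            (forall z, z \in nbh1 y ->
               #|[set w in nbh2 y | e z w]| = sbar /\
               #|[set w in nbh1 y | e z w]| = t) &
            (forall z, z \in nbh2 y ->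
               #|[set w in nbh2 y | e z w]| = s /\
               #|[set w in nbh1 y | e z w]| = s)]),
      (forall x z : T, e x z -> #|[set w | e x w && e z w]| = t) &
      #|T| = 1 + 2 * s + 2 * sbar]].

Definition edges_in (S : {set T}) : {set {set T}} :=
  [set E : {set T} | [exists u, exists v,
     [&& u \in S, v \in S, e u v & E == [set u; v]]]].

Definition square (Q : {set {set T}}) : Prop :=
  exists x1 x2 x3 x4 : T,
    [/\ uniq [:: x1; x2; x3; x4],
        [&& e x1 x2, e x2 x3, e x3 x4 & e x4 x1] &
        Q = [set [set x1; x2]; [set x2; x3]; [set x3; x4]; [set x4; x1]]].

End Graph.

(* Main.v *)
Require Import Defs.
From mathcomp Require Import all_boot zify.
Set Implicit Arguments. Unset Strict Implicit. Unset Printing Implicit Defensive.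

Lemma card1_eq (T : finType) (A : {set T}) a b :
  #|A| = 1 -> a \in A -> b \in A -> a = b.
Proof.
move=> /eqP/cards1P [x ->]; rewrite !inE => /eqP-> /eqP-> //.
Qed.

Lemma pair_set_eq (T : finType) (a b u v : T) : u != v ->
  [set a; b] = [set u; v] -> (a = u /\ b = v) \/ (a = v /\ b = u).
Proof.
move=> uv E.
have ha : a \in [set u; v] by rewrite -E !inE eqxx.
have hb : b \in [set u; v] by rewrite -E !inE eqxx orbT.
have hu : u \in [set a; b] by rewrite E !inE eqxx.
have hv : v \in [set a; b] by rewrite E !inE eqxx orbT.
move: ha hb hu hv; rewrite !inE.
case/orP=> /eqP ha; case/orP=> /eqP hb; subst a b.
- by move=> _ /orP [] /eqP vu; rewrite vu eqxx in uv.
- by left.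
- by right.
- by move=> /orP [] /eqP vu; rewrite vu eqxx in uv.
Qed.

Section Matching.
Variables (T : finType) (e : rel T).
Hypothesis esym : symmetric e.
Hypothesis eirr : irreflexive e.
Variable S : {set T}.
Hypothesis H1 : forall z, z \in S -> #|[set w in S | e z w]| = 1.

Definition partner z := odflt z [pick w in S | e z w].

Lemma partnerP z : z \in S -> partner z \in S /\ e z (partner z).
Proof.
move=> zS; rewrite /partner; case: pickP => [w /andP[wS ezw] | none] //=.
have := H1 zS.
suff -> : [set w in S | e z w] = set0 by rewrite cards0.
by apply/setP=> w; rewrite !inE none.
Qed.

Lemma partner_uniq z w : z \in S -> w \in S -> e z w -> w = partner z.
Proof.
move=> zS wS ezw; have [pS ep] := partnerP zS.
apply: (card1_eq (H1 zS)); by rewrite inE ?wS ?pS.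
Qed.

Lemma partnerK z : z \in S -> partner (partner z) = z.
Proof.
move=> zS; have [pS ep] := partnerP zS.
by symmetry; apply: partner_uniq; rewrite // esym.
Qed.

Lemma edge_form E x : E \in edges_in e S -> x \in E ->
  x \in S /\ E = [set x; partner x].
Proof.
rewrite inE => /existsP [u /existsP [v /and4P [uS vS euv /eqP ->]]].
rewrite !inE => /orP [] /eqP ->.
  by split=> //; rewrite -(partner_uniq uS vS euv).
split=> //; rewrite setUC.
by rewrite -(partner_uniq vS uS _) // esym.
Qed.

Lemma pair_in_edges x : x \in S -> [set x; partner x] \in edges_in e S.
Proof.
move=> xS; have [pS ep] := partnerP xS.
rewrite inE; apply/existsP; exists x; apply/existsP; exists (partner x).
by rewrite xS pS ep eqxx.
Qed.

Lemma matching_partition :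
  partition (edges_in e S) S /\ 2 * #|edges_in e S| = #|S|.
Proof.
have part : partition (edges_in e S) S.
  apply/and3P; split.
  - apply/eqP/setP=> z; apply/bigcupP/idP.
      by case=> E HE zE; case: (edge_form HE zE).
    by move=> zS; exists [set z; partner z]; rewrite ?pair_in_edges ?inE ?eqxx.
  - apply/trivIsetP=> A B HA HB neq; apply/pred0P=> x /=; apply/negbTE/andP=> [[xA xB]].
    case: (edge_form HA xA) => _ EA; case: (edge_form HB xB) => _ EB.
    by move/eqP: neq; apply; rewrite EA EB.
  - apply/negP=> H0.
    move: H0; rewrite inE => /existsP [u /existsP [v /and4P [_ _ _ /eqP E]]].
    by have := setU11 u [set v]; rewrite -E inE.
split=> //.
rewrite (card_partition part).
rewrite (eq_bigr (fun _ => 2)); first by rewrite sum_nat_const mulnC.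
move=> E HE.
have [x xE] : exists x, x \in E.
  move: HE; rewrite inE => /existsP [u /existsP [v /and4P [_ _ _ /eqP ->]]].
  by exists u; rewrite !inE eqxx.
case: (edge_form HE xE) => xS ->; rewrite cards2.
have [_ ep] := partnerP xS.
case: eqP => // h; by rewrite -h eirr in ep.
Qed.

End Matching.
Lemma card4 (T : finType) (a b c d : T) : uniq [:: a; b; c; d] -> #|[set a; b; c; d]| = 4.
Proof. move=> U; rewrite -[4]/(size [:: a; b; c; d]) -(card_uniqP U); apply: eq_card => x; rewrite !inE; by rewrite !orbA. Qed.
Lemma set2_neq (T : finType) (a b c d : T) : a \notin [set c; d] -> [set a; b] != [set c; d].
Proof. by move=> h; apply/negP => /eqP E; move: h; rewrite -E !inE eqxx. Qed.
Lemma set2_neq' (T : finType) (a b c d : T) : b \notin [set c; d] -> [set a; b] != [set c; d].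
Proof. by rewrite (setUC [set a]); apply: set2_neq. Qed.
Lemma cyc_card (T : finType) (x1 x2 x3 x4 : T) : uniq [:: x1; x2; x3; x4] ->
  #|[set [set x1; x2]; [set x2; x3]; [set x3; x4]; [set x4; x1]]| = 4.
Proof.
rewrite !cons_uniq !inE !negb_or => /and5P [/and3P [n12 n13 n14] /andP [n23 n24] n34 _ _].
have a12 : ([set x1;x2] == [set x2;x3]) = false.
  by apply/negbTE/set2_neq; rewrite !inE negb_or n12 n13.
have a13 : ([set x1;x2] == [set x3;x4]) = false.
  by apply/negbTE/set2_neq; rewrite !inE negb_or n13 n14.
have a14 : ([set x1;x2] == [set x4;x1]) = false.
  by apply/negbTE/set2_neq'; rewrite !inE negb_or n24 eq_sym n12.
have a23 : ([set x2;x3] == [set x3;x4]) = false.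
  by apply/negbTE/set2_neq; rewrite !inE negb_or n23 n24.
have a24 : ([set x2;x3] == [set x4;x1]) = false.
  by apply/negbTE/set2_neq; rewrite !inE negb_or n24 eq_sym n12.
have a34 : ([set x3;x4] == [set x4;x1]) = false.
  by apply/negbTE/set2_neq; rewrite !inE negb_or n34 eq_sym n13.
by apply: card4; rewrite !cons_uniq !inE a12 a13 a14 a23 a24 a34.
Qed.

Section Main.
Variables (T : finType) (e : rel T) (s sbar : nat) (y : T).
Hypothesis ext : extensible e 1 s sbar.

Notation Y1 := (nbh1 e y).
Notation Y2 := (nbh2 e y).

Lemma eS : symmetric e.
Proof. by case: ext => [[]]. Qed.
Lemma eirr : irreflexive e.
Proof. by case: ext => [[]]. Qed.
Lemma sbarE : sbar = 2 * (s - 1).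
Proof. case: ext => _ _ H _; lia. Qed.
Lemma ydeg : [/\ #|Y1| = 2 * s, #|Y2| = 2 * sbar,
            (forall z, z \in Y1 ->
               #|[set w in Y2 | e z w]| = sbar /\
               #|[set w in Y1 | e z w]| = 1) &
            (forall z, z \in Y2 ->
               #|[set w in Y2 | e z w]| = s /\
               #|[set w in Y1 | e z w]| = s)].
Proof. by case: ext => _ _ _ [H _ _]; apply: H. Qed.
Lemma etri x z : e x z -> #|[set w | e x w && e z w]| = 1.
Proof. by case: ext => _ _ _ [_ H _]; apply: H. Qed.

Lemma inY1 z : (z \in Y1) = e y z.
Proof. by rewrite inE. Qed.

Lemma Y2P z : z \in Y2 -> [/\ z != y, ~~ e y z & z \notin Y1].
Proof. by rewrite !inE => /andP [/andP [-> ->] _]. Qed.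

Lemma common_uniq x z w1 w2 :
  e x z -> e x w1 -> e z w1 -> e x w2 -> e z w2 -> w1 = w2.
Proof.
move=> xz a b c d; apply: (card1_eq (etri xz)); by rewrite inE ?a ?b ?c ?d.
Qed.

Lemma Y1H1 z : z \in Y1 -> #|[set w in Y1 | e z w]| = 1.
Proof. by case: ydeg => _ _ H _ /H []. Qed.

Notation pY1 := (partner e Y1).

Lemma part1 : partition (edges_in e Y1) Y1 /\ #|edges_in e Y1| = s.
Proof.
have [P C] := matching_partition eS eirr Y1H1.
split=> //; case: ydeg C => -> _ _ _; lia.
Qed.

Lemma s_ge2 : 2 <= s.
Proof.
case: ext => _ [d1 [x [z [xz nxz]]]] H _.
have s1 : 1 <= s by lia.
case: (ltnP 1 s) => // s_le1.
have ss : s = 1 by lia.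
have sb0 : sbar = 0 by rewrite sbarE ss.
have Y20 : forall w, w \notin Y2.
  move=> w; apply/negP => wY2.
  have : #|Y2| = 0 by case: ydeg => _ -> _ _; rewrite sb0.
  by move/eqP; rewrite cards_eq0 => /eqP Y2e; rewrite Y2e inE in wY2.
have inyY1 : forall w, w != y -> e y w.
  move=> w wy; apply/negPn/negP => nyw.
  have [m [ym mw]] : exists m, e y m /\ e m w by apply: d1 => //; rewrite eq_sym.
  have := Y20 w; rewrite !inE wy nyw /=; move/negP; apply.
  by apply/existsP; exists m; rewrite ym.
have [xy | xy] := eqVneq x y.
  by subst x; move: nxz; rewrite inyY1 // eq_sym.
have [zy | zy] := eqVneq z y.
  by subst z; move: nxz; rewrite eS inyY1.
have xY1 : x \in Y1 by rewrite inY1 inyY1.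
have zY1 : z \in Y1 by rewrite inY1 inyY1.
have Y1E : Y1 = [set x; z].
  apply/eqP; rewrite eq_sym eqEcard; apply/andP; split.
    by apply/subsetP => w; rewrite !inE => /orP [] /eqP ->; rewrite -inY1.
  by case: ydeg => -> _ _ _; rewrite cards2 xz ss.
have [pS ep] := partnerP Y1H1 xY1.
have : pY1 x \in [set x; z] by rewrite -Y1E.
rewrite !inE => /orP [] /eqP pE; rewrite pE in ep.
  by rewrite eirr in ep.
by rewrite ep in nxz.
Qed.

Section Pairs.
Variables (a' a'' : 'I_s -> T).
Hypothesis Hab : [set [set a' i; a'' i] | i : 'I_s] = edges_in e Y1.

Definition V (k : 'I_s * bool) := if k.2 then a' k.1 else a'' k.1.
Definition Bk k := [set z in Y2 | e (V k) z].
Definition kbar (k : 'I_s * bool) := (k.1, ~~ k.2).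

Lemma pair_edge i : [set a' i; a'' i] \in edges_in e Y1.
Proof. by rewrite -Hab; apply: imset_f. Qed.

Lemma V_in k : V k \in [set a' k.1; a'' k.1].
Proof. by case: k => i []; rewrite /V /= !inE eqxx ?orbT. Qed.

Lemma V_Y1 k : V k \in Y1 /\ V (kbar k) = pY1 (V k).
Proof.
have [VY1 E] := edge_form eS Y1H1 (pair_edge k.1) (V_in k).
split=> //.
have [_ ep] := partnerP Y1H1 VY1.
have np : V k != pY1 (V k) by apply/negP => /eqP h; rewrite -h eirr in ep.
case: (pair_set_eq np E) => [[h1 h2]|[h1 h2]]; case: k VY1 E ep np h1 h2 => i [];
  rewrite /kbar /V /= => VY1 E ep np h1 h2 //.
all: first [by rewrite -h1 eqxx in np | by rewrite -h2 eqxx in np | idtac].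
Qed.

Lemma eV k : e (V k) (V (kbar k)).
Proof.
have [VY1 ->] := V_Y1 k; by have [] := partnerP Y1H1 VY1.
Qed.

Lemma V_inj : injective V.
Proof.
move=> k k' Hk.
have [_ E1] := edge_form eS Y1H1 (pair_edge k.1) (V_in k).
have [_ E2] := edge_form eS Y1H1 (pair_edge k'.1) (V_in k').
have inj : {in predT &, injective (fun i : 'I_s => [set a' i; a'' i])}.
  apply/imset_injP; rewrite Hab; case: part1 => _ ->.
  by rewrite card_ord.
have e1 : k.1 = k'.1 by apply: inj; rewrite // E1 E2 Hk.
case: k k' Hk e1 {E1 E2} => i b [j c] /= Hk e1; subst j.
case: b c Hk => [] [] //= Hk.
- by move: Hk (eV (i, true)); rewrite /V /= => ->; rewrite eirr.
- by move: Hk (eV (i, false)); rewrite /V /= => ->; rewrite eirr.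
Qed.

Lemma B_Y2 k w : w \in Bk k -> w \in Y2.
Proof. by rewrite inE => /andP []. Qed.

Lemma B_e k w : w \in Bk k -> e (V k) w.
Proof. by rewrite inE => /andP []. Qed.

Lemma Bdisj k w : w \in Bk k -> w \in Bk (kbar k) -> False.
Proof.
move=> h1 h2.
have [VY1 _] := V_Y1 k; have [VY1' _] := V_Y1 (kbar k).
have wy : w = y.
  apply: (common_uniq (eV k) (B_e h1) _ _ _).
  - exact: B_e h2.
  - by rewrite eS -inY1.
  - by rewrite eS -inY1.
by case: (Y2P (B_Y2 h1)); rewrite wy eqxx.
Qed.

Lemma Bcard k : #|Bk k| = sbar.
Proof. by case: ydeg => _ _ H _; case: (H _ (proj1 (V_Y1 k))). Qed.

Lemma Bcov i w : w \in Y2 -> (w \in Bk (i, true)) || (w \in Bk (i, false)).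
Proof.
move=> wY2.
suff : Bk (i, true) :|: Bk (i, false) = Y2 by move/setP/(_ w); rewrite inE wY2.
apply/eqP; rewrite eqEcard; apply/andP; split.
  by apply/subsetP=> z; rewrite inE => /orP [] /B_Y2.
rewrite cardsU !Bcard.
have -> : Bk (i, true) :&: Bk (i, false) = set0.
  by apply/setP=> z; rewrite in_setI in_set0; apply/negbTE/andP=> [[h1 h2]]; exact: (Bdisj (k:=(i,true)) h1 h2).
by case: ydeg => _ -> _ _; rewrite cards0; lia.
Qed.

Lemma M1 k w : w \in Bk k -> #|[set w' in Bk k | e w w']| = 1.
Proof.
move=> wB.
rewrite -(etri (B_e wB)).
suff -> : [set w' in Bk k | e w w'] = [set x | e (V k) x && e w x] by [].
apply/setP=> x; rewrite !inE.
apply/andP/andP => [[/andP [_ h1] h2] | [h1 h2]]; first by split.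
have [VY1 Vp] := V_Y1 k.
split=> //; apply/andP; split=> //.
have [wy nyw _] := Y2P (B_Y2 wB).
apply/andP; split; last first.
  by apply/existsP; exists (V k); rewrite -inY1 VY1 h1.
apply/andP; split.
  by apply/negP => /eqP xy; subst x; rewrite eS h2 in nyw.
apply/negP => yx.
have xp : x = V (kbar k).
  by rewrite Vp; apply: (partner_uniq Y1H1) => //; rewrite inY1.
by apply: (Bdisj wB); rewrite inE (B_Y2 wB) /= -xp eS h2.
Qed.

Lemma two_common k k' u v : k != k' -> u \in Bk k -> v \in Bk k ->
  u \in Bk k' -> v \in Bk k' -> e u v -> False.
Proof.
move=> kk' a b c d uv.
have := common_uniq uv (x := u) (z := v) (w1 := V k) (w2 := V k').
rewrite !(eS _ (V _)) (B_e a) (B_e b) (B_e c) (B_e d) => /(_ isT isT isT isT) /V_inj.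
by move/eqP; rewrite (negbTE kk').
Qed.


Lemma kw_in u i : u \in Y2 -> u \in Bk (i, u \in Bk (i, true)).
Proof.
move=> uY2; case: (boolP (u \in Bk (i, true))) => // h.
by have := Bcov i uY2; rewrite (negbTE h).
Qed.

Lemma Y2edge u v : u \in Y2 -> v \in Y2 -> e u v ->
  exists k, u \in Bk k /\ v \in Bk k.
Proof.
move=> uY2 vY2 uv.
pose kw i := (i, u \in Bk (i, true)).
have kwin i : u \in Bk (kw i) := kw_in i uY2.
pose f i := partner e (Bk (kw i)) u.
have fP i : f i \in Bk (kw i) /\ e u (f i) := partnerP (@M1 (kw i)) (kwin i).
have finj : injective f.
  move=> i j fij; case: (eqVneq i j) => // ij; exfalso.
  have kk : kw i != kw j.
    by apply/negP=> /eqP /(congr1 fst) /= h; rewrite h eqxx in ij.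
  have [a1 b1] := fP i; have [a2 b2] := fP j.
  apply: (two_common kk (kwin i) a1 (kwin j) _ b1).
  by rewrite fij.
have N2E : [set w in Y2 | e u w] = f @: setT.
  apply/esym/eqP; rewrite eqEcard; apply/andP; split.
    apply/subsetP => w /imsetP [i _ ->]; have [a b] := fP i.
    by rewrite inE (B_Y2 a) b.
  rewrite card_imset // cardsT card_ord.
  by case: ydeg => _ _ _ H; rewrite (proj1 (H _ uY2)).
have : v \in f @: setT by rewrite -N2E inE vY2 uv.
case/imsetP => i _ ->; exists (kw i); split; [exact: kwin | exact: (proj1 (fP i))].
Qed.

Lemma notri u v w : u \in Y2 -> v \in Y2 -> w \in Y2 ->
  e u v -> e v w -> e u w -> False.
Proof.
move=> uY2 vY2 wY2 uv vw uw.
have [k [uk vk]] := Y2edge uY2 vY2 uv.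
have wk : w = V k.
  apply: (common_uniq uv uw) => //; by rewrite eS ?(B_e uk) ?(B_e vk).
have [_ _ /negP] := Y2P wY2; apply; rewrite wk; exact: (proj1 (V_Y1 k)).
Qed.

Lemma edge_uniqk E : E \in edges_in e Y2 -> exists! k, E \subset Bk k.
Proof.
rewrite inE => /existsP [u /existsP [v /and4P [uY2 vY2 uv /eqP ->]]].
have [k [uk vk]] := Y2edge uY2 vY2 uv.
exists k; split; first by rewrite subUset !sub1set uk vk.
move=> k'; rewrite subUset !sub1set => /andP [uk' vk'].
case: (eqVneq k k') => // kk'; exfalso; exact: (two_common kk' uk vk uk' vk' uv).
Qed.

Lemma Bcov' k w : w \in Y2 -> w \notin Bk k -> w \in Bk (kbar k).
Proof.
case: k => i b wY2; have := Bcov i wY2; rewrite /kbar /=.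
by case: b; case: (w \in Bk (i, true)); case: (w \in Bk (i, false)).
Qed.

Lemma K k u v1 v2 : u \in Bk k -> v1 \in Bk (kbar k) -> v2 \in Bk (kbar k) ->
  e v1 v2 -> e u v1 = ~~ e u v2.
Proof.
move=> uB v1S v2S v12.
set S := Bk (kbar k).
set X := [set w in S | e u w].
have uY2 := B_Y2 uB.
have Xcard : #|X| = s - 1.
  set N2 := [set w in Y2 | e u w].
  have e1 : N2 :&: Bk k = [set w in Bk k | e u w].
    apply/setP=> w; rewrite in_setI [w \in N2]inE [w \in [set w in Bk k | _]]inE.
    by case wB: (w \in Bk k); rewrite ?andbF //= andbT (B_Y2 wB).
  have e2 : N2 :\: Bk k = X.
    apply/setP=> w; rewrite in_setD [w \in N2]inE [w \in X]inE.
    case wS: (w \in S).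
      have wnB : w \notin Bk k by apply/negP => wB; exact: (Bdisj wB wS).
      by rewrite wnB (B_Y2 wS).
    case wB: (w \in Bk k) => //=; case wY2: (w \in Y2) => //=.
    by move: wS; rewrite /S (Bcov' wY2) // wB.
  have := cardsID (Bk k) N2; rewrite e1 e2 (M1 uB).
  by case: ydeg => _ _ _ H; rewrite (proj1 (H _ uY2)); lia.
have H1S := @M1 (kbar k).
pose p := partner e S.
have XS : X \subset S by apply/subsetP => w; rewrite inE => /andP [].
have Zcard : #|S :\: X| = s - 1.
  have := cardsID X S; rewrite (setIidPr XS) Xcard Bcard sbarE; lia.
have pXZ : p @: X = S :\: X.
  apply/eqP; rewrite eqEcard; apply/andP; split.
    apply/subsetP => w /imsetP [x xX ->].
    have xS : x \in S by apply: (subsetP XS).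
    have [pS ep] := partnerP H1S xS.
    rewrite in_setD pS andbT; apply/negP; rewrite inE pS /= => upx.
    move: xX; rewrite inE => /andP [_ ux].
    exact: (notri uY2 (B_Y2 xS) (B_Y2 pS) ux ep upx).
  rewrite card_in_imset ?Zcard ?Xcard //.
  move=> a b aX bX pab.
  by rewrite -(partnerK eS H1S (subsetP XS _ aX)) -/p pab /p (partnerK eS H1S (subsetP XS _ bX)).
case h1: (e u v1); case h2: (e u v2) => //=.
  exfalso; exact: (notri uY2 (B_Y2 v1S) (B_Y2 v2S) h1 v12 h2).
have : v1 \in p @: X by rewrite pXZ in_setD v1S andbT inE v1S h1.
case/imsetP => x xX v1E.
have v2E : v2 = p v1 by apply: (partner_uniq H1S).
have : v2 = x by rewrite v2E v1E /p (partnerK eS H1S (subsetP XS _ xX)).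
by move: xX; rewrite inE => /andP [_ ux] v2x; rewrite v2x ux in h2.
Qed.

Lemma same_k k1 k2 p q : p \in Bk k1 -> q \in Bk k1 -> p \in Bk k2 -> q \in Bk k2 ->
  e p q -> k1 = k2.
Proof.
move=> a b c d pq; case: (eqVneq k1 k2) => // h; exfalso.
exact: (two_common h a b c d pq).
Qed.

Lemma core i u1 u2 v1 v2 :
  u1 \in Bk (i,true) -> u2 \in Bk (i,true) -> e u1 u2 ->
  v1 \in Bk (i,false) -> v2 \in Bk (i,false) -> e v1 v2 ->
  e u1 v1 -> e u2 v2 -> ~~ e u1 v2 -> ~~ e u2 v1 ->
  (forall Bt : {set {set T}}, [/\ Bt \subset edges_in e Y2, #|Bt| = 2 &
      square e ([set u1; u2] |: ([set v1; v2] |: Bt))] <->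
      Bt = [set [set u1; v1]; [set u2; v2]]) /\
  (exists! j : 'I_s, exists b' b'' : {set T},
      [/\ [set [set u1; v1]; [set u2; v2]] = [set b'; b''],
          b' \subset Bk (j,true) & b'' \subset Bk (j,false)]).
Proof.
move=> u1B u2B u12 v1B v2B v12 u1v1 u2v2 nu1v2 nu2v1.
set M := [set [set u1; v1]; [set u2; v2]].
have dis : forall a b, a \in Bk (i,true) -> b \in Bk (i,false) -> (a == b) = false.
  move=> a b aB bB; apply/negbTE/negP => /eqP ab; subst b.
  exact: (Bdisj (k := (i,true)) aB bB).
have f12 : (u1 == u2) = false by apply/negbTE/negP => /eqP h; rewrite h eirr in u12.
have g12 : (v1 == v2) = false by apply/negbTE/negP => /eqP h; rewrite h eirr in v12.
have h11 := dis _ _ u1B v1B. have h12 := dis _ _ u1B v2B.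
have h21 := dis _ _ u2B v1B. have h22 := dis _ _ u2B v2B.
have f21 : (u2 == u1) = false by rewrite eq_sym.
have g21 : (v2 == v1) = false by rewrite eq_sym.
have k11 : (v1 == u1) = false by rewrite eq_sym.
have k12 : (v2 == u1) = false by rewrite eq_sym.
have k21 : (v1 == u2) = false by rewrite eq_sym.
have k22 : (v2 == u2) = false by rewrite eq_sym.
have uY2 : forall a, a \in Bk (i,true) -> a \in Y2 by move=> a /B_Y2.
have vY2 : forall a, a \in Bk (i,false) -> a \in Y2 by move=> a /B_Y2.
have MY2 : M \subset edges_in e Y2.
  apply/subsetP => E; rewrite !inE => /orP [] /eqP ->; apply/existsP.
    by exists u1; apply/existsP; exists v1; rewrite uY2 ?vY2 ?u1v1 ?eqxx.
  by exists u2; apply/existsP; exists v2; rewrite uY2 ?vY2 ?u2v2 ?eqxx.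
have Mcard : #|M| = 2.
  rewrite cards2; suff -> : ([set u1; v1] != [set u2; v2]) by [].
  by apply: set2_neq; rewrite !inE f12 h12.
have Msq : square e ([set u1; u2] |: ([set v1; v2] |: M)).
  exists u1, u2, v2, v1; split.
  - by rewrite !cons_uniq !inE f12 h12 h11 h22 h21 g21.
  - by rewrite u12 u2v2 (eS v2 v1) v12 (eS v1 u1) u1v1.
  - rewrite (setUC [set v2] [set v1]) (setUC [set v1] [set u1]).
    apply/setP => X; rewrite !inE.
    case: (X == [set u1; u2]); case: (X == [set v1; v2]);
    case: (X == [set u1; v1]); case: (X == [set u2; v2]); by rewrite ?orbT.
have BtM : forall Bt : {set {set T}}, [/\ Bt \subset edges_in e Y2, #|Bt| = 2 &
      square e ([set u1; u2] |: ([set v1; v2] |: Bt))] -> Bt = M.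
  move=> Bt [BtY2 Btc [x1 [x2 [x3 [x4 [U ed QE]]]]]].
  set Q := _ |: _ in QE.
  have Qc : #|Q| = 4 by rewrite QE cyc_card.
  set X := [set x1; x2; x3; x4].
  have QX : forall E, E \in Q -> E \subset X.
    move=> E; rewrite QE !inE -!orbA => /or4P [] /eqP ->;
      by rewrite /X subUset !sub1set !inE !eqxx /= ?orbT.
  have inX : forall a, a \in [set u1; u2] :|: [set v1; v2] -> a \in X.
    move=> a; rewrite in_setU => /orP [] aE.
      by apply: (subsetP (QX _ _)) aE; rewrite /Q setU11.
    by apply: (subsetP (QX _ _)) aE; rewrite /Q setU1r // setU11.
  have XE : X = [set u1; u2; v1; v2].
    apply/eqP; rewrite eq_sym eqEcard; apply/andP; split.
      apply/subsetP => a aU; apply: inX; move: aU.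
      by rewrite !inE -!orbA => /or4P [] /eqP -> ; rewrite !eqxx /= ?orbT.
    rewrite card4 ?cyc_card // ?card4 //.
    by rewrite !cons_uniq !inE f12 h12 h11 h22 h21 g12.
  have [Ha Hb] : ([set u1; u2] \in [set v1; v2] |: Bt) = false /\ ([set v1; v2] \in Bt) = false.
    move: Qc; rewrite /Q !cardsU1 Btc.
    case: ([set u1; u2] \in [set v1; v2] |: Bt); case: ([set v1; v2] \in Bt) => //= h; exfalso; lia.
  have BtsubM : Bt \subset M.
    apply/subsetP => b bBt.
    have bQ : b \in Q by rewrite /Q !in_setU bBt !orbT.
    have := subsetP BtY2 _ bBt; rewrite inE => /existsP [p /existsP [q /and4P [_ _ pq /eqP bpq]]].
    have bX := QX _ bQ; rewrite XE bpq in bX.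
    have pX : p \in [set u1; u2; v1; v2] by apply: (subsetP bX); rewrite !inE eqxx.
    have qX : q \in [set u1; u2; v1; v2] by apply: (subsetP bX); rewrite !inE eqxx orbT.
    subst b.
    move: pX qX pq Ha Hb bBt; rewrite !inE -!orbA => /or4P [] /eqP -> /or4P [] /eqP -> pq;
    rewrite ?eirr // ?(negbTE nu1v2) ?(negbTE nu2v1) // ?(eS v2 u1) ?(eS v1 u2) ?(negbTE nu1v2) ?(negbTE nu2v1) // in pq;
    rewrite ?(setUC [set u2] [set u1]) ?(setUC [set v2] [set v1]) ?(setUC [set v1] [set u1]) ?(setUC [set v2] [set u2]);
    rewrite ?eqxx ?orbT //; move=> Ha Hb bBt; rewrite ?bBt ?orbT // in Ha Hb.
  apply/eqP; rewrite eqEcard BtsubM Btc Mcard //.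
split.
  move=> Bt; split; first exact: BtM.
  by move=> ->.
have [k [u1k v1k]] : exists k, u1 \in Bk k /\ v1 \in Bk k.
  by apply: Y2edge => //; [exact: uY2 | exact: vY2].
have u2k : u2 \in Bk (kbar k).
  apply: Bcov'; first exact: uY2.
  apply/negP => u2k.
  have kE : k = (i, true) by apply: (same_k u1k u2k u1B u2B u12).
  by subst k; exact: (Bdisj (k := (i,true)) v1k v1B).
have v2k : v2 \in Bk (kbar k).
  apply: Bcov'; first exact: vY2.
  apply/negP => v2k.
  have kE : k = (i, false) by apply: (same_k v1k v2k v1B v2B v12).
  by subst k; exact: (Bdisj (k := (i,true)) u1B u1k).
have sub1 : [set u1; v1] \subset Bk k by rewrite subUset !sub1set u1k v1k.
have sub2 : [set u2; v2] \subset Bk (kbar k) by rewrite subUset !sub1set u2k v2k.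
exists k.1; split.
  case: k u1k v1k u2k v2k sub1 sub2 => j [] /= _ _ _ _ sub1 sub2.
    by exists [set u1; v1], [set u2; v2].
  by exists [set u2; v2], [set u1; v1]; rewrite /M setUC.
move=> j' [c' [c'' [ME c'B _]]].
have c'M : c' \in M by rewrite ME !inE eqxx.
move: c'M; rewrite !inE => /orP [] /eqP c'E; subst c'.
  move: c'B; rewrite subUset !sub1set => /andP [a b].
  by rewrite (same_k u1k v1k a b u1v1).
move: c'B; rewrite subUset !sub1set => /andP [a b].
by exact: (congr1 fst (same_k u2k v2k a b u2v2)).
Qed.

Lemma part2 i : partition [set Bk (i,true); Bk (i,false)] Y2.
Proof.
apply/and3P; split.
- apply/eqP/setP=> z; apply/bigcupP/idP.
    case=> X HX zX.
    have : X = Bk (i,true) \/ X = Bk (i,false) by move: HX; rewrite !inE => /orP [] /eqP; [left|right].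
    by case=> HX'; subst X; exact: B_Y2 zX.
  move=> zY2; have := Bcov i zY2; case/orP => zB.
    by exists (Bk (i,true)); rewrite // !inE eqxx.
  by exists (Bk (i,false)); rewrite // !inE eqxx orbT.
- apply/trivIsetP => A B; rewrite !inE => /orP [] /eqP -> /orP [] /eqP -> //; rewrite ?eqxx // => _;
  apply/pred0P=> x /=; apply/negbTE/andP=> [[xA xB]].
    exact: (Bdisj (k:=(i,true)) xA xB).
  exact: (Bdisj (k:=(i,true)) xB xA).
- rewrite !inE negb_or; apply/andP; split; apply/negP => /eqP h.
    by have := Bcard (i,true); rewrite -h cards0 sbarE; have := s_ge2; lia.
  by have := Bcard (i,false); rewrite -h cards0 sbarE; have := s_ge2; lia.
Qed.

End Pairs.
End Main.

Theorem proposition7 (T : finType) (e : rel T) (s sbar : nat) (y : T) :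
  extensible e 1 s sbar ->
  let Y1 := nbh1 e y in
  let Y2 := nbh2 e y in
  (* (1) *)
  (partition (edges_in e Y1) Y1 /\ #|edges_in e Y1| = s) /\
  (forall a' a'' : 'I_s -> T,
    [set [set a' i; a'' i] | i : 'I_s] = edges_in e Y1 ->
    let A' i := [set z in Y2 | e (a' i) z] in
    let A'' i := [set z in Y2 | e (a'' i) z] in
    let B (k : 'I_s * bool) := if k.2 then A' k.1 else A'' k.1 in
    (* (2) *)
    sbar = 2 * (s - 1) /\
    (forall i, partition [set A' i; A'' i] Y2 /\
               #|A' i| = sbar /\ #|A'' i| = sbar) /\
    (* (3) *)
    (forall u v w, u \in Y2 -> v \in Y2 -> w \in Y2 ->
       ~ (e u v /\ e v w /\ e u w)) /\
    (* (4) *)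
    (forall E, E \in edges_in e Y2 -> exists! k, E \subset B k) /\
    (forall k, partition (edges_in e (B k)) (B k) /\
               #|edges_in e (B k)| = s - 1) /\
    (* (5) *)
    (forall i (al' al'' : {set T}),
       al' \in edges_in e (A' i) -> al'' \in edges_in e (A'' i) ->
       (exists! Bt : {set {set T}},
          [/\ Bt \subset edges_in e Y2, #|Bt| = 2 &
              square e (al' |: (al'' |: Bt))]) /\
       (forall Bt : {set {set T}},
          [/\ Bt \subset edges_in e Y2, #|Bt| = 2 &
              square e (al' |: (al'' |: Bt))] ->
          exists! j : 'I_s, exists b' b'' : {set T},
            [/\ Bt = [set b'; b''], b' \subset A' j & b'' \subset A'' j]))).
Proof.
move=> ext Y1 Y2; subst Y1 Y2.
split; first exact: part1 y ext.
move=> a' a'' Hab A' A'' B.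
have AE : forall i, A' i = Bk e y a' a'' (i, true) by [].
have AE' : forall i, A'' i = Bk e y a' a'' (i, false) by [].
have BE : forall k, B k = Bk e y a' a'' k by case=> i [].
split; first exact: sbarE ext.
split.
  move=> i; rewrite AE AE'; split; first by have := part2 ext Hab i.
  split; [have := Bcard ext Hab (i,true) | have := Bcard ext Hab (i,false)]; by [].
split.
  move=> u v w uY vY wY [uv [vw uw]]; exact (notri ext Hab uY vY wY uv vw uw).
split.
  move=> E HE; have [k [Hk Hu]] := edge_uniqk ext Hab HE.
  exists k; split; first by rewrite BE.
  by move=> k'; rewrite BE; apply: Hu.
split.
  move=> k; rewrite BE.
  have [P C] := matching_partition (eS ext) (eirr ext) (@M1 _ _ _ _ _ ext _ _ Hab k).
  split=> //; rewrite (Bcard ext Hab) (sbarE ext) in C; lia.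
move=> i al' al''; rewrite AE AE'.
rewrite inE => /existsP [u1 /existsP [u2 /and4P [u1B u2B u12 /eqP ->]]].
rewrite inE => /existsP [v1 /existsP [v2 /and4P [v1B v2B v12 /eqP ->]]].
have K1 := K ext Hab (k := (i, true)) u1B v1B v2B v12.
have K2 := K ext Hab (k := (i, true)) u2B v1B v2B v12.
have Y2u : forall a, a \in Bk e y a' a'' (i,true) -> a \in nbh2 e y by move=> a /B_Y2.
have Y2v : forall a, a \in Bk e y a' a'' (i,false) -> a \in nbh2 e y by move=> a /B_Y2.
case E11 : (e u1 v1) in K1.
  have nu1v2 : ~~ e u1 v2 by rewrite -K1.
  have nu2v1 : ~~ e u2 v1.
    apply/negP => h; exact: (notri ext Hab (Y2u _ u1B) (Y2u _ u2B) (Y2v _ v1B) u12 h E11).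
  have u2v2 : e u2 v2 by rewrite -(negbK (e u2 v2)) -K2 (negbTE nu2v1).
  have [C1 C2] := core ext Hab u1B u2B u12 v1B v2B v12 E11 u2v2 nu1v2 nu2v1.
  split.
    exists [set [set u1; v1]; [set u2; v2]]; split; first exact/C1.
    by move=> Bt HBt; symmetry; apply/C1.
  by move=> Bt /C1 ->; exact: C2.
have u1v2 : e u1 v2 by rewrite -(negbK (e u1 v2)) -K1.
have nu2v2 : ~~ e u2 v2.
  apply/negP => h; exact: (notri ext Hab (Y2u _ u1B) (Y2u _ u2B) (Y2v _ v2B) u12 h u1v2).
have u2v1 : e u2 v1 by rewrite K2.
have v21 : e v2 v1 by rewrite (eS ext).
have [C1 C2] := core ext Hab u1B u2B u12 v2B v1B v21 u1v2 u2v1 (negbT E11) nu2v2.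
rewrite (setUC [set v1] [set v2]).
split.
  exists [set [set u1; v2]; [set u2; v1]]; split; first exact/C1.
  by move=> Bt HBt; symmetry; apply/C1.
by move=> Bt /C1 ->; exact: C2.
Qed.
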